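(* Let $n\ge1$ be an integer, $\alpha\ge0$, and let $p(x)=\sum_{j=k}^m c_jx^j$ be a real polynomial with $m\ge k\ge1$ and $c_m,c_k>0$. Define $$f_\alpha(t):=\int_0^\infty x^\alpha e^{-tx^n}\,dx,\qquad g(t):=\int_0^\infty e^{-tp(x)}\,dx.$$ Then there exist constants $C,t_0>0$ depending only on $\alpha$, $n$, $k$ and the coefficients of $p$ such that $$\frac{f_\alpha(t)}{g(t)}\le C\,t^{\frac1k-\frac{\alpha+1}{n}}\qquad\text{for all } t\ge t_0.$$ *)

(* Defs.v *)
From HB Require Import structures.
From mathcomp Require Import all_boot all_order all_algebra.
From mathcomp Require Import all_classical all_reals all_analysis.
Set Implicit Arguments. Unset Strict Implicit. Unset Printing Implicit Defensive.
Import Order.TTheory GRing.Theory Num.Theory.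
Local Open Scope ring_scope.
Local Open Scope classical_set_scope.

Definition polyfun (R : realType) (k m : nat) (c : nat -> R) (x : R) : R :=
  \sum_(k <= j < m.+1) c j * x ^+ j.

Definition f_alpha (R : realType) (n : nat) (alpha t : R) : R :=
  Rintegral (@lebesgue_measure R) `[0%R, +oo[
    (fun x => x `^ alpha * expR (- (t * x ^+ n))).

Definition g_int (R : realType) (k m : nat) (c : nat -> R) (t : R) : R :=
  Rintegral (@lebesgue_measure R) `[0%R, +oo[
    (fun x => expR (- (t * polyfun k m c x))).

(* Main.v *)
Require Import Defs.
From HB Require Import structures.
From mathcomp Require Import all_boot all_order all_algebra.
From mathcomp Require Import all_classical all_reals all_analysis.
From mathcomp Require Import measurable_realfun.
Import Order.TTheory GRing.Theory Num.Theory.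
Local Open Scope ring_scope.
Local Open Scope classical_set_scope.

Section scaling.
Context {R : realType}.
Local Notation mu := (@lebesgue_measure R).

Lemma scale_integral (s : R) (s0 : 0 < s) (f : R -> \bar R) :
  measurable_fun [set: R] f -> (forall x, (0 <= f x)%E) ->
  (\int[mu]_(x in `[0%R, +oo[) f x = s%:E * \int[mu]_(x in `[0%R, +oo[) f (s * x)%R)%E.
Proof.
move=> mf f0.
have ms : measurable_fun [set: measurableTypeR R] ( *%R s : measurableTypeR R -> measurableTypeR R).
  exact: measurable_realfun.measurable_funM.
pose phi := ( *%R s : measurableTypeR R -> measurableTypeR R).
have s0' : (0 <= s) by exact: ltW.
pose m := mscale (NngNum s0') (measure_function_pushforward__canonical__measure_function_Measure mu ms).
have key : forall A, measurable A -> mu A = m A.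
  apply: lebesgue_measure_unique => X /ocitvP [->|[[a b]/= ab ->]].
    by rewrite !measure0.
  rewrite /m /mscale /= /pushforward /=.
  have -> : ( *%R s) @^-1` `]a, b] = `]a / s, b / s].
    apply/seteqP; split => x /=; rewrite !in_itv /=.
      by rewrite ltr_pdivrMr// ler_pdivlMr// [x * s]mulrC.
    by rewrite ltr_pdivrMr// ler_pdivlMr// [x * s]mulrC.
  rewrite (lebesgue_measure_itv `]a, b]%R) (lebesgue_measure_itv `](a/s), (b/s)]%R) /= !lte_fin ltr_pM2r ?invr_gt0// ab.
  by rewrite -EFinD -EFinM -mulrBl mulrCA divff ?gt_eqF// mulr1.
rewrite (eq_measure_integral m); last by move=> A mA _; exact: key.
rewrite ge0_integral_mscale //=.
2: exact: measurable_funTS mf.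
congr (_ * _)%E.
rewrite ge0_integral_pushforward //=; last exact: measurable_funTS mf.
congr (integral _ _ _).
apply/seteqP; split => x /=; rewrite !in_itv /= !andbT.
  by rewrite pmulr_rge0.
by rewrite pmulr_rge0.
Qed.

Lemma fineZ (r : R) (x : \bar R) : 0 < r -> fine (r%:E * x)%E = r * fine x.
Proof.
move=> r0; case: x => [x| |] /=.
- by [].
- by rewrite muleC gt0_mulye ?lte_fin// mulr0.
- by rewrite muleC gt0_mulNye ?lte_fin// mulr0.
Qed.

Lemma meas_fa (a t : R) (n : nat) :
  measurable_fun [set: R] (fun x : R => (x `^ a * expR (- (t * x ^+ n)))%:E).
Proof.
apply/measurable_EFinP.
apply: measurable_realfun.measurable_funM; first exact: measurable_powR.
apply: measurableT_comp; first exact: measurable_expR.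
apply: measurableT_comp => //.
apply: measurable_realfun.measurable_funM; first exact: measurable_cst.
exact: measurable_funX.
Qed.


Lemma f_scale (n : nat) (a t : R) : (1 <= n)%N -> 0 < t ->
  f_alpha n a 1 = t `^ ((a + 1) / n%:R) * f_alpha n a t.
Proof.
move=> n1 t0.
set s := t `^ (n%:R^-1).
have s0 : 0 < s by exact: powR_gt0.
have nz : (n%:R : R) != 0 by rewrite pnatr_eq0 -lt0n.
have sn : s ^+ n = t.
  by rewrite -powR_mulrn ?(ltW s0)// -powRrM mulVf// powRr1 // ltW.
rewrite /f_alpha /Rintegral.
rewrite (@scale_integral s s0 _ (meas_fa a 1 n)); last first.
  by move=> x; rewrite lee_fin mulr_ge0 // ?powR_ge0 ?expR_ge0.
have -> : (\int[mu]_(x in `[0%R, +oo[) ((s * x) `^ a * expR (- (1 * (s * x) ^+ n)))%:E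
  = \int[mu]_(x in `[0%R, +oo[) ((s `^ a)%:E * (x `^ a * expR (- (t * x ^+ n)))%:E))%E.
  apply: eq_integral => x; rewrite inE /= in_itv /= andbT => x0.
  by rewrite -EFinM mulrA -powRM ?(ltW s0)// mul1r exprMn sn.
rewrite ge0_integralZl_EFin //; last first.
  all: try exact: powR_ge0.
  all: try exact: (measurable_funTS (meas_fa a t n)).
  all: try by move=> x _; rewrite lee_fin mulr_ge0 // ?powR_ge0 ?expR_ge0.
rewrite muleA -EFinM fineZ; last by rewrite mulr_gt0 // powR_gt0.
congr (_ * _).
rewrite -{1}(powRr1 (ltW s0)) -powRD; last by rewrite (gt_eqF s0) implybT.
by rewrite /s -powRrM mulrC addrC.
Qed.


Lemma meas_g (k m : nat) (c : nat -> R) (t : R) :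
  measurable_fun [set: R] (fun x : R => (expR (- (t * polyfun k m c x)))%:E).
Proof.
apply/measurable_EFinP.
apply: measurableT_comp; first exact: measurable_expR.
apply: measurableT_comp => //.
apply: measurable_realfun.measurable_funM; first exact: measurable_cst.
rewrite /polyfun; apply: measurable_sum => j.
apply: measurable_realfun.measurable_funM; first exact: measurable_cst.
exact: measurable_funX.
Qed.

Lemma poly_le (k m : nat) (c : nat -> R) (x : R) : 0 <= x -> x <= 1 ->
  polyfun k m c x <= (\sum_(k <= j < m.+1) `|c j|) * x ^+ k.
Proof.
move=> x0 x1; rewrite /polyfun big_distrl /=.
rewrite !big_nat; apply: ler_sum => j /andP[kj _].
apply: (le_trans (ler_norm _)); rewrite normrM (ger0_norm (exprn_ge0 _ x0)).
by apply: ler_wpM2l => //; exact: (ler_wiXn2l x0 x1 kj).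
Qed.

Lemma g_lower (k m : nat) (c : nat -> R) (t : R) : (1 <= k)%N -> 1 <= t ->
  ((expR (- \sum_(k <= j < m.+1) `|c j|) * t `^ (- k%:R^-1))%:E <=
   \int[mu]_(x in `[0%R, +oo[) (expR (- (t * polyfun k m c x)))%:E)%E.
Proof.
move=> k1 t1.
have t0 : 0 < t by apply: lt_le_trans t1.
set A := \sum_(k <= j < m.+1) `|c j|.
have A0 : 0 <= A by rewrite /A; apply: sumr_ge0 => j _.
set d := t `^ (- k%:R^-1).
have d0 : 0 < d by exact: powR_gt0.
have d1 : d <= 1.
  rewrite /d -[leRHS](powRr0 t); apply: ler_powR => //.
have nz : (k%:R : R) != 0 by rewrite pnatr_eq0 -lt0n.
have dk : d ^+ k = t^-1.
  by rewrite -powR_mulrn ?(ltW d0)// -powRrM mulNr mulVf// powR_inv1 // ltW.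
apply: (@le_trans _ _ (\int[mu]_(x in `[0%R, d]) (expR (- (t * polyfun k m c x)))%:E)%E); last first.
  apply: ge0_subset_integral => //.
  all: try exact: measurable_funTS (meas_g k m c t).
  all: try by move=> x _; rewrite lee_fin expR_ge0.
  all: try by apply: subset_itvl; rewrite bnd_simp.
apply: (@le_trans _ _ (\int[mu]_(x in `[0%R, d]) (cst (expR (- A))%:E x))%E).
  rewrite integral_cst //.
  have h := lebesgue_measure_itv `[0, d]%R.
  rewrite /= lte_fin d0 in h.
  rewrite oppr0 adde0 in h.
  set M := (X in (_ <= _ * X)%E); have -> : M = d%:E by exact: h.
  by rewrite EFinM.
apply: ge0_le_integral => //.
all: try by move=> x _; rewrite lee_fin expR_ge0.
all: try exact: measurable_cst.
all: try exact: measurable_funTS (meas_g k m c t).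
move=> x; rewrite /= in_itv /= => /andP[x0 xd].
rewrite lee_fin ler_expR lerN2.
apply: (le_trans (y := t * (A * x ^+ k))).
  by rewrite ler_wpM2l ?(ltW t0)// poly_le // (le_trans xd).
apply: (le_trans (y := t * (A * d ^+ k))).
  rewrite ler_wpM2l ?(ltW t0)// ler_wpM2l //.
  by rewrite lerXn2r // nnegrE ltW.
by rewrite dk mulrCA mulfV ?gt_eqF // mulr1.
Qed.

End scaling.

From mathcomp Require Import ring lra.

Theorem lemma4p12 (R : realType) (n : nat) (alpha : R) (k m : nat) (c : nat -> R)
  (hn : (1 <= n)%N) (halpha : 0 <= alpha) (hk : (1 <= k)%N) (hkm : (k <= m)%N)
  (hcm : 0 < c m) (hck : 0 < c k) :
  exists C t0 : R, 0 < C /\ 0 < t0 /\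
    forall t : R, t0 <= t ->
      f_alpha n alpha t / g_int k m c t
        <= C * t `^ (k%:R^-1 - (alpha + 1) / n%:R).
Proof.
set A := \sum_(k <= j < m.+1) `|c j|.
set F1 := f_alpha n alpha 1.
have F10 : 0 <= F1.
  by apply: fine_ge0; apply: integral_ge0 => x _; rewrite lee_fin mulr_ge0 ?powR_ge0 ?expR_ge0.
have eA : 0 < expR A := expR_gt0 A.
exists ((F1 + 1) * expR A), 1; split; first by apply: mulr_gt0 => //; lra.
split; first exact: ltr01.
move=> t t1.
have t0 : 0 < t by apply: lt_le_trans t1.
set e := (alpha + 1) / n%:R.
have hf := f_scale n alpha t hn t0.
set P := t `^ e.
have P0 : 0 < P by exact: powR_gt0.
have ft : f_alpha n alpha t = F1 / P.
  by rewrite /F1 hf mulrAC mulfV ?gt_eqF // mul1r.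
have RHS0 : 0 <= (F1 + 1) * expR A * t `^ (k%:R^-1 - e).
  by rewrite mulr_ge0 ?powR_ge0 // mulr_ge0 //; lra.
rewrite /g_int /Rintegral.
set J := (\int[_]_(x in _) _)%E.
have J0 : (0 <= J)%E by apply: integral_ge0 => x _; rewrite lee_fin expR_ge0.
have [Jfin|Jinf] := boolP (J \is a fin_num); last first.
  have -> : J = +oo%E.
    by move: Jinf J0; case: (J) => //.
  by rewrite /= invr0 mulr0.
have hg := g_lower k m c t hk t1.
rewrite -/A -/J in hg.
set L := expR (- A) * t `^ (- k%:R^-1).
have L0 : 0 < L by rewrite mulr_gt0 ?expR_gt0 ?powR_gt0.
have gL : L <= fine J by rewrite -lee_fin fineK.
have g0 : 0 < fine J by apply: lt_le_trans gL.
rewrite ft.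
apply: (le_trans (y := F1 / P / L)).
  apply: ler_wpM2l; first by rewrite divr_ge0 // ltW.
  by rewrite lef_pV2 ?posrE.
have eqL : F1 / P / L = F1 * (expR A * (t `^ k%:R^-1 / P)).
  rewrite /L invfM expRN invrK powRN invrK.
  ring.
rewrite eqL powRB; last by rewrite (gt_eqF t0) implybT.
rewrite -/P -mulrA; apply: ler_wpM2r; last lra.
by rewrite mulr_ge0 ?divr_ge0 ?powR_ge0 ?ltW.
Qed.
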